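(* Let $\Sigma$ be a labeled graph over $\mathcal B$, let $\alpha\in\mathrm{Aut}(F(\mathcal B))$, and let $\sigma$ be an immersed edge path in $\alpha\Sigma$. Then there are an immersed edge path $\hat\sigma=e_0\cdots e_m$ in $\Sigma$, an initial edge subpath $\sigma_0$ of $\alpha(e_0)$, and a terminal edge subpath $\sigma_m$ of $\alpha(e_m)$ such that $\sigma_0\neq\alpha(e_0)$, $\sigma_m\neq\alpha(e_m)$, and $\alpha(\hat\sigma)$ is the immersed edge path $\sigma_0\sigma\sigma_m$.
   Context: $F(\mathcal B)$ is the free group on the finite set $\mathcal B$. A labeled graph assigns to each oriented edge a label in $\mathcal B^{\pm1}$, with $e^{-1}$ carrying the inverse label. For $\alpha\in\mathrm{Aut}(F(\mathcal B))$, the labeled graph $\alpha\Sigma$ is obtained from $\Sigma$ by replacing each oriented edge $e$ with label $c$ by a path $\alpha(e)$ of $k$ subedges, where $\alpha(c)$ is the reduced word $c_1^{\delta_1}\cdots c_k^{\delta_k}$ ($c_i\in\mathcal B$, $\delta_i=\pm1$), the $i$-th subedge being labeled $c_i$ and oriented along $e$ if $\delta_i=1$ and oppositely otherwise; $\alpha$ of an edge path is the concatenation of the $\alpha(e_i)$. An edge path is a sequence of oriented edges $e_0\cdots e_m$ with $\partial_1e_{i-1}=\partial_0e_i$; it is immersed if no $e_{i}=e_{i-1}^{-1}$. *)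

(* Defs.v *)
From mathcomp Require Import all_boot.
Set Implicit Arguments. Unset Strict Implicit. Unset Printing Implicit Defensive.

(* A letter (b, s) : B * bool stands for b if s = false and b^{-1} if s = true. *)
Definition letter (B : finType) := (B * bool)%type.
Definition linv (B : finType) (x : letter B) : letter B := (x.1, ~~ x.2).

Definition reduced (B : finType) (w : seq (letter B)) : bool :=
  sorted (fun x y => y != linv x) w.

Fixpoint freduce (B : finType) (w : seq (letter B)) : seq (letter B) :=
  match w with
  | [::] => [::]
  | x :: w' =>
      match freduce w' with
      | [::] => [:: x]
      | y :: r' => if y == linv x then r' else x :: y :: r'
      end
  end.

Lemma freduce_reduced (B : finType) (w : seq (letter B)) : reduced (freduce w).
Proof.
elim: w => [|x w IH] //=.
move: IH; case: (freduce w) => [|y r'] //= IH.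
case: ifP => [_|/negbT hy]; first by move: IH; rewrite /reduced /=; apply: path_sorted.
by rewrite /reduced /= hy.
Qed.

Definition FG (B : finType) := {w : seq (letter B) | reduced w}.
Definition fmul (B : finType) (u v : FG B) : FG B :=
  exist _ (freduce (proj1_sig u ++ proj1_sig v)) (freduce_reduced _).

Definition is_aut (B : finType) (alpha : FG B -> FG B) : Prop :=
  (forall u v, alpha (fmul u v) = fmul (alpha u) (alpha v)) /\ bijective alpha.

Definition gen (B : finType) (c : letter B) : FG B := exist _ [:: c] isT.
Definition aword (B : finType) (alpha : FG B -> FG B) (c : letter B)
  : seq (letter B) := proj1_sig (alpha (gen c)).

Record lgraph (B : finType) := LGraph {
  vtx : Type;
  edg : Type;
  einv : edg -> edg;
  esrc : edg -> vtx;
  elab : edg -> letter B }.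

Definition etgt (B : finType) (G : lgraph B) (e : edg G) : vtx G :=
  esrc (einv e).

Definition is_lgraph (B : finType) (G : lgraph B) : Prop :=
  [/\ forall e : edg G, einv (einv e) = e,
      forall e : edg G, einv e <> e
    & forall e : edg G, elab (einv e) = linv (elab e)].

Fixpoint chain (B : finType) (G : lgraph B) (p : seq (edg G)) : Prop :=
  match p with
  | e :: ((f :: _) as q) => [/\ etgt e = esrc f, f <> einv e & chain q]
  | _ => True
  end.
Definition immersed (B : finType) (G : lgraph B) (p : seq (edg G)) : Prop :=
  p <> [::] /\ chain p.

(* Every geometric edge of Sigma is represented by its unique orientation e
   with positive label b = (elab e).1; it is subdivided into k = |alpha(b)|
   subedges (e, i), i < k.  The oriented edge (e, i, false) traverses the
   i-th subedge in the direction of e, (e, i, true) in the opposite one.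
   Traversed along e the i-th subedge reads the i-th letter c_i^{delta_i}
   of alpha(b) (this is the labelling "c_i, oriented along e iff delta_i=1").
   Subdivision vertices are (e, j), 0 < j < k. *)
Section AlphaGraph.
Variables (B : finType) (alpha : FG B -> FG B) (S : lgraph B).

Definition posl (e : edg S) : bool := ~~ (elab e).2.
Definition kk (e : edg S) : nat := size (aword alpha ((elab e).1, false)).

Definition aedge_ok (t : edg S * nat * bool) : bool :=
  posl t.1.1 && (t.1.2 < kk t.1.1).
Definition aedge := {t : edg S * nat * bool | aedge_ok t}.

Definition aedge_inv (s : aedge) : aedge :=
  let: exist (e, i, d) h := s in exist aedge_ok (e, i, ~~ d) h.

Definition aedge_src (s : aedge) : (vtx S + (edg S * nat))%type :=
  let: (e, i, d) := proj1_sig s in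
  if ~~ d then (if i == 0 then inl (esrc e) else inr (e, i))
  else (if i.+1 == kk e then inl (etgt e) else inr (e, i.+1)).

Definition aedge_lab (s : aedge) : letter B :=
  let: (e, i, d) := proj1_sig s in
  let c := nth (elab e) (aword alpha ((elab e).1, false)) i in
  if d then linv c else c.

Definition alphaG : lgraph B :=
  @LGraph B (vtx S + (edg S * nat))%type aedge aedge_inv aedge_src aedge_lab.

(* alpha(e) for an oriented edge e of Sigma, as the list of its subedges
   in alpha Sigma (given by their underlying triples) *)
Definition alpha_edge (e : edg S) : seq (edg S * nat * bool) :=
  if posl e then [seq (e, i, false) | i <- iota 0 (kk e)]
  else [seq (einv e, i, true) | i <- rev (iota 0 (kk (einv e)))].

Definition alpha_path (p : seq (edg S)) : seq (edg S * nat * bool) :=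
  flatten [seq alpha_edge e | e <- p].

End AlphaGraph.

(* Main.v *)
Require Import Defs.
From mathcomp Require Import all_boot zify.
Set Implicit Arguments. Unset Strict Implicit. Unset Printing Implicit Defensive.

Fixpoint pchain (T : Type) (r : T -> T -> Prop) (l : seq T) : Prop :=
  match l with
  | x :: ((y :: _) as l') => r x y /\ pchain r l'
  | _ => True
  end.

Lemma pchain_nth (T : Type) (r : T -> T -> Prop) (d : T) (l : seq T) :
  (forall i, i.+1 < size l -> r (nth d l i) (nth d l i.+1)) -> pchain r l.
Proof.
elim: l => [|a l IH] //=; case: l IH => [|b l] IH //= H.
split; first exact: (H 0).
apply: IH => i Hi; exact: (H i.+1).
Qed.

Lemma nth_pchain (T : Type) (r : T -> T -> Prop) (d : T) (l : seq T) i :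
  pchain r l -> i.+1 < size l -> r (nth d l i) (nth d l i.+1).
Proof.
elim: l i => [|a l IH] i //=; case: l IH => [|b l] IH //= [H1 H2] Hi.
case: i Hi => [|i] Hi //=.
exact: (IH i H2).
Qed.

Lemma pchain_catr (T : Type) (r : T -> T -> Prop) x a b y :
  pchain r (rcons x a) -> r a b -> pchain r (b :: y) ->
  pchain r (rcons x a ++ b :: y).
Proof.
elim: x => [|c x IH] /=; first by move=> _ H1 H2; split.
case E: (rcons x a) IH => [|d z]; first by case: x E.
move=> IH [H0 H1] H2 H3; split => //.
exact: IH.
Qed.

Lemma freduce_id (B : finType) (w : seq (letter B)) : reduced w -> freduce w = w.
Proof.
elim: w => [|x w IH] //= Hr.
have Hw : reduced w by move: Hr; rewrite /reduced /=; apply: path_sorted.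
rewrite IH //; case: w Hr {IH Hw} => [|y w] //.
rewrite /reduced /= => /andP [Hy _].
by rewrite (negbTE Hy).
Qed.

Lemma aut_nonempty (B : finType) (alpha : FG B -> FG B) (c : letter B) :
  is_aut alpha -> 0 < size (aword alpha c).
Proof.
move=> [Hm [g Hg1 Hg2]].
have Hinj : injective alpha by exact: (can_inj Hg1).
pose one : FG B := exist _ [::] isT.
have FGeq : forall u v : FG B, proj1_sig u = proj1_sig v -> u = v.
  move=> [u hu] [v hv] /= E; subst v; congr exist; exact: eq_irrelevance.
have H1 : forall u : FG B, fmul u one = u.
  move=> u; apply: FGeq; rewrite /= cats0; apply: freduce_id; exact: (proj2_sig u).
have H2 : forall u : FG B, fmul one u = u.
  move=> u; apply: FGeq; rewrite /=; apply: freduce_id; exact: (proj2_sig u).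
have Hone : alpha one = one.
  have := Hm (g one) one; rewrite H1 Hg2 H2 => E; by rewrite -E.
rewrite /aword; case E: (proj1_sig (alpha (gen c))) => [|x w] //.
have : alpha (gen c) = alpha one by rewrite Hone; apply: FGeq; rewrite E.
by move/Hinj/(congr1 (@proj1_sig _ _)).
Qed.

Section Tri.
Variables (B : finType) (alpha : FG B -> FG B) (S : lgraph B).
Hypothesis hS : is_lgraph S.
Hypothesis hk : forall e : edg S, 0 < kk alpha e.

Definition T3 := (edg S * nat * bool)%type.
Definition inv3 (t : T3) : T3 := let: (e, i, d) := t in (e, i, ~~ d).
Definition src3 (t : T3) : (vtx S + (edg S * nat))%type :=
  let: (e, i, d) := t in
  if ~~ d then (if i == 0 then inl (esrc e) else inr (e, i))
  else (if i.+1 == kk alpha e then inl (etgt e) else inr (e, i.+1)).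
Definition tgt3 t := src3 (inv3 t).
Definition R3 (t u : T3) : Prop := tgt3 t = src3 u /\ u <> inv3 t.
Definition ok (t : T3) := aedge_ok alpha t.
Definition E3 (t : T3) : edg S := let: (e, _, d) := t in if d then einv e else e.
Notation AE := (alpha_edge alpha).

Lemma src3_inr e i d v : src3 (e, i, d) = inr v -> v = (e, if d then i.+1 else i).
Proof. by rewrite /src3; destruct d => /=; case: ifP => _ // [<-]. Qed.
Lemma tgt3_inr e i d v : tgt3 (e, i, d) = inr v -> v = (e, if d then i else i.+1).
Proof. by rewrite /tgt3 /src3; destruct d => /=; case: ifP => _ // [<-]. Qed.

Lemma key3 s t u v : R3 s u -> R3 t u -> src3 u = inr v -> s = t.
Proof.
case: s => [[es i1] ds]; case: t => [[et i2] dt]; case: u => [[eu iu] du].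
move=> [Hs Ns] [Ht Nt] Hu; rewrite Hu in Hs Ht.
move: (tgt3_inr Hs) (tgt3_inr Ht) (src3_inr Hu) => -> [E1 E2] [E3 E4].
subst; rewrite /inv3 in Ns Nt.
clear Hs Ht Hu; case: ds dt du E2 E4 Ns Nt => [] [] [] /= E2 E4 Ns Nt; subst => //;
  try (have -> : i1 = i2 by lia); try congruence.
Qed.

Lemma posl_einv (e : edg S) : posl (einv e) = ~~ posl e.
Proof. by case: hS => _ _ H; rewrite /posl H /linv /=. Qed.

Lemma edge_decomp (e : edg S) : exists e' d, posl e' /\ e = if d then einv e' else e'.
Proof.
case P: (posl e); first by exists e, false.
exists (einv e), true; rewrite posl_einv P; split => //.
by case: hS => ->.
Qed.

Lemma AEchar (e' : edg S) d (x0 : T3) : posl e' ->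
  size (AE (if d then einv e' else e')) = kk alpha e' /\
  forall p, p < kk alpha e' ->
    nth x0 (AE (if d then einv e' else e')) p = (e', if d then (kk alpha e').-1 - p else p, d).
Proof.
move=> P; case: d; rewrite /alpha_edge.
- rewrite posl_einv P /=; case: hS => -> _ _.
  rewrite size_map size_rev size_iota; split => // p Hp.
  rewrite (nth_map 0) ?size_rev ?size_iota // nth_rev ?size_iota // nth_iota ?size_iota;
    last by lia.
  congr (_, _, _); lia.
- rewrite P size_map size_iota; split => // p Hp.
  by rewrite (nth_map 0) ?size_iota // nth_iota.
Qed.

Lemma AE_size (e : edg S) : 0 < size (AE e).
Proof.
have [e' [d [P ->]]] := edge_decomp e.
by have [-> _] := AEchar d (e', 0, false) P.
Qed.

Lemma AE_chain (e : edg S) : pchain R3 (AE e).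
Proof.
have [e' [d [P ->]]] := edge_decomp e.
set x0 : T3 := (e', 0, false).
have [Hs Hn] := AEchar d x0 P.
apply: (@pchain_nth _ _ x0) => i; rewrite Hs => Hi.
rewrite !Hn; try lia.
have := hk e'; set k := kk alpha e' => hk'.
clear Hs Hn; rewrite /R3 /tgt3 /src3 /inv3; destruct d => /=; split.
- have -> : (k.-1 - i == 0) = false by apply/eqP; lia.
  have -> : ((k.-1 - i.+1).+1 == k) = false by apply/eqP; lia.
  congr (inr (_, _)); lia.
- by case.
- have -> : (i.+1 == k) = false by apply/eqP; lia.
  by [].
- by case.
Qed.

Lemma AE_ok (e : edg S) : all ok (AE e).
Proof.
have [e' [d [P ->]]] := edge_decomp e.
set x0 : T3 := (e', 0, false).
have [Hs Hn] := AEchar d x0 P.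
apply/(all_nthP x0) => i; rewrite Hs => Hi.
rewrite Hn // /ok /aedge_ok /= P /=; have := hk e'; clear Hs Hn; destruct d => /=; lia.
Qed.

Lemma AE_start (e : edg S) (x0 : T3) : src3 (nth x0 (AE e) 0) = inl (esrc e).
Proof.
have [e' [d [P ->]]] := edge_decomp e.
have [Hs Hn] := AEchar d x0 P.
have hk' := hk e'.
rewrite Hn //; clear Hs Hn; destruct d => //=.
have -> : (((kk alpha e').-1 - 0).+1 == kk alpha e') = true by apply/eqP; lia.
by [].
Qed.

Lemma AE_interior (e : edg S) (x0 : T3) p : 0 < p -> p < size (AE e) ->
  exists v, src3 (nth x0 (AE e) p) = inr v.
Proof.
have [e' [d [P ->]]] := edge_decomp e.
have [Hs Hn] := AEchar d x0 P.
have hk' := hk e'.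
rewrite Hs => H0 H1; rewrite Hn //; clear Hs Hn; destruct d => /=; eexists.
- have -> : (((kk alpha e').-1 - p).+1 == kk alpha e') = false by apply/eqP; lia.
  by [].
- have -> : (p == 0) = false by apply/eqP; lia.
  by [].
Qed.

Lemma AE_pos (s : T3) : ok s -> exists p, p < size (AE (E3 s)) /\ nth s (AE (E3 s)) p = s.
Proof.
case: s => [[e' j] d] /andP [/= P Hj].
have [Hs Hn] := AEchar d (e', j, d) P.
exists (if d then (kk alpha e').-1 - j else j); rewrite /E3 Hs.
split; first by destruct d; lia.
rewrite Hn; last by destruct d; lia.
congr (_, _, _); destruct d => //; lia.
Qed.

Lemma AE_end (s : T3) w : ok s -> tgt3 s = inl w ->
  nth s (AE (E3 s)) (size (AE (E3 s))).-1 = s /\ w = etgt (E3 s).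
Proof.
case: s => [[e' j] d] /andP [/= P Hj].
have [Hs Hn] := AEchar d (e', j, d) P.
have hk' := hk e'.
rewrite /E3 Hs Hn; last by lia.
rewrite /tgt3 /src3 /inv3; destruct d => /=.
- case: ifP => // /eqP -> [<-]; split; first by rewrite subnn.
  by rewrite /etgt; case: hS => ->.
- case: ifP => // /eqP Hj' [<-]; split => //.
  congr (_, _, _); lia.
Qed.

Lemma AE_flip (s : T3) : ok s ->
  nth s (AE (einv (E3 s))) 0 = inv3 (nth s (AE (E3 s)) (size (AE (E3 s))).-1).
Proof.
case: s => [[e' j] d] /andP [/= P Hj].
have hk' := hk e'.
have -> : einv (E3 (e', j, d)) = if ~~ d then einv e' else e'.
  by rewrite /E3; destruct d => //=; case: hS => ->.
have [Hs Hn] := AEchar d (e', j, d) P.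
have [Hs' Hn'] := AEchar (~~ d) (e', j, d) P.
rewrite /E3 Hs Hn' // Hn; last by lia.
by destruct d => /=; rewrite ?subnn ?subn0.
Qed.


Lemma main (L : seq T3) : L <> [::] -> pchain R3 L -> all ok L ->
  exists (e0 : edg S) (rest : seq (edg S)) p q,
    immersed (e0 :: rest) /\ p < size (AE e0) /\ 0 < q /\
    take p (AE e0) ++ L ++ drop q (AE (last e0 rest)) = alpha_path alpha (e0 :: rest) /\
    pchain R3 (take p (AE e0) ++ L ++ drop q (AE (last e0 rest))).
Proof.
elim: L => [|s L IH] // _.
case: L IH => [|u L] IH.
- move=> _ /andP [Hok _].
  have [p [Hp Hn]] := AE_pos Hok.
  exists (E3 s), [::], p, p.+1; split; first by split.
  do 2 (split => //).
  have -> : last (E3 s) [::] = E3 s by [].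
  have HA : take p (AE (E3 s)) ++ [:: s] ++ drop p.+1 (AE (E3 s)) = AE (E3 s).
    by rewrite -{3}(cat_take_drop p (AE (E3 s))) (drop_nth s Hp) Hn.
  rewrite HA /alpha_path /= cats0; split => //; exact: AE_chain.
- move=> [Hsu Hch] /andP [Hok Hall].
  have [//|e0 [rest [p [q [Him [Hp [Hq [Heq Hch']]]]]]]] := IH _ Hch Hall.
  have Hap : alpha_path alpha (e0 :: rest) = AE e0 ++ alpha_path alpha rest by [].
  case: p Hp Heq Hch' => [|p] Hp Heq Hch'.
  + rewrite take0 cat0s in Heq Hch'.
    have Hu : u = nth s (AE e0) 0.
      by have := congr1 (fun l => nth s l 0) Heq; rewrite Hap !nth_cat (AE_size e0) /= => ->.
    have Hst := AE_start e0 s; rewrite -Hu in Hst.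
    have Htg : tgt3 s = inl (esrc e0) by rewrite Hsu.1 Hst.
    have [Hend Hw] := AE_end Hok Htg.
    have Hsz := AE_size (E3 s).
    have HA' : rcons (take (size (AE (E3 s))).-1 (AE (E3 s))) s = AE (E3 s).
      rewrite -{3}Hend -take_nth; last by lia.
      by rewrite prednK // take_size.
    exists (E3 s), (e0 :: rest), (size (AE (E3 s))).-1, q.
    have -> : last (E3 s) (e0 :: rest) = last e0 rest by [].
    split.
      split => //=; split => //; last exact: Him.2.
      move=> He; apply: Hsu.2; rewrite Hu He AE_flip // Hend //.
    split; first by lia.
    split => //.
    rewrite cat_cons -cat_rcons; split.
      by rewrite HA' Heq.
    rewrite cat_cons; apply: pchain_catr => //.
      by rewrite HA'; exact: AE_chain.
  + have Hu : u = nth s (AE e0) p.+1.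
      have := congr1 (fun l => nth s l p.+1) Heq.
      by rewrite Hap nth_cat (size_takel (ltnW Hp)) ltnn subnn [in X in _ = X -> _]nth_cat Hp /= => ->.
    have [v Hv] : exists v, src3 (nth s (AE e0) p.+1) = inr v by apply: AE_interior...
    have Hr := nth_pchain s (AE_chain e0) Hp.
    rewrite -Hu in Hv Hr.
    have Hst : s = nth s (AE e0) p := key3 Hsu Hr Hv.
    exists e0, rest, p, q.
    have E : take p (AE e0) ++ (s :: u :: L) ++ drop q (AE (last e0 rest)) =
             take p.+1 (AE e0) ++ (u :: L) ++ drop q (AE (last e0 rest)).
      rewrite (take_nth s); last exact: ltnW Hp.
      by rewrite -Hst cat_rcons.
    rewrite E; split => //; split; first exact: ltnW Hp.
    by split => //; split.
Qed.

Lemma aedge_val_inj (a b : aedge alpha S) : proj1_sig a = proj1_sig b -> a = b.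
Proof. by case: a b => [a ha] [b hb] /= E; subst b; congr exist; exact: eq_irrelevance. Qed.
Lemma aedge_inv_val (a : aedge alpha S) : proj1_sig (aedge_inv a) = inv3 (proj1_sig a).
Proof. by case: a => [[[e i] d] h]. Qed.
Lemma aedge_src_val (a : aedge alpha S) : aedge_src a = src3 (proj1_sig a).
Proof. by case: a => [[[e i] d] h]. Qed.

Lemma chain_conv (l : seq (aedge alpha S)) :
  chain (G := alphaG alpha S) l <-> pchain R3 (map (fun x : aedge alpha S => proj1_sig x) l).
Proof.
elim: l => [|a l IH] //; case: l IH => [|b l] IH //.
have E1 : (etgt (G := alphaG alpha S) a = esrc (l := alphaG alpha S) b) <->
          (tgt3 (proj1_sig a) = src3 (proj1_sig b)).
  change (aedge_src (aedge_inv a) = aedge_src b <-> tgt3 (proj1_sig a) = src3 (proj1_sig b)).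
  by rewrite !aedge_src_val aedge_inv_val.
have E2 : (b <> einv (l := alphaG alpha S) a) <-> (proj1_sig b <> inv3 (proj1_sig a)).
  change (b <> aedge_inv a <-> proj1_sig b <> inv3 (proj1_sig a)).
  split => H E; apply: H; first by apply: aedge_val_inj; rewrite aedge_inv_val.
  by rewrite E aedge_inv_val.
rewrite /= /R3; split.
- by case=> H1 H2 H3; split; [split; [apply/E1 | apply/E2] | apply/IH].
- by case=> [[H1 H2] H3]; split; [apply/E1 | apply/E2 | apply/IH].
Qed.

Lemma lift (l : seq T3) : all ok l -> exists l' : seq (aedge alpha S), map (fun x : aedge alpha S => proj1_sig x) l' = l.
Proof.
elim: l => [|x l IH] /=; first by exists [::].
case/andP => Hx /IH [l' Hl']; exists (exist _ x Hx :: l'); by rewrite /= Hl'.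
Qed.

Lemma final (sigma : seq (edg (alphaG alpha S))) (hsigma : immersed sigma) :
  exists (e0 : edg S) (rest : seq (edg S))
         (sigma0 sigmam : seq (edg (alphaG alpha S))),
    immersed (e0 :: rest) /\
        (exists tau, [seq proj1_sig x | x <- sigma0] ++ tau = alpha_edge alpha e0) /\
        [seq proj1_sig x | x <- sigma0] <> alpha_edge alpha e0 /\
        (exists tau, tau ++ [seq proj1_sig x | x <- sigmam]
                     = alpha_edge alpha (last e0 rest)) /\
        [seq proj1_sig x | x <- sigmam] <> alpha_edge alpha (last e0 rest) /\
        [seq proj1_sig x | x <- sigma0 ++ sigma ++ sigmam]
          = alpha_path alpha (e0 :: rest) /\
    immersed (sigma0 ++ sigma ++ sigmam).
Proof.
case: hsigma => Hne Hch.
have Hall : all ok (map (fun x : aedge alpha S => proj1_sig x) sigma).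
  by elim: (sigma) => //= a l ->; rewrite andbT; exact: (proj2_sig a).
have [|e0 [rest [p [q [Him [Hp [Hq [Heq Hc]]]]]]]] :=
  main (L := map (fun x : aedge alpha S => proj1_sig x) sigma) _ ((chain_conv sigma).1 Hch) Hall.
  by case: (sigma) Hne.
have := AE_ok e0; rewrite -(cat_take_drop p (AE e0)) all_cat => /andP [H0 _].
have := AE_ok (last e0 rest); rewrite -(cat_take_drop q (AE (last e0 rest))) all_cat => /andP [_ Hm].
have [s0 Hs0] := lift H0; have [sm Hsm] := lift Hm.
have Hsz := AE_size (last e0 rest).
exists e0, rest, s0, sm.
split => //.
split; first by exists (drop p (AE e0)); rewrite Hs0 cat_take_drop.
split; first by rewrite Hs0 => /(congr1 size); rewrite size_take Hp => E; lia.
split; first by exists (take q (AE (last e0 rest))); rewrite Hsm cat_take_drop.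
split; first by rewrite Hsm => /(congr1 size); rewrite size_drop => E; lia.
split; first by rewrite !map_cat Hs0 Hsm.
split.
  by case: s0 {Hs0} => [|a s0'] //=; case: (sigma) Hne.
by apply/chain_conv; rewrite !map_cat Hs0 Hsm.
Qed.

End Tri.

Theorem lemma9p3 (B : finType) (S : lgraph B) (alpha : FG B -> FG B)
  (hS : is_lgraph S) (halpha : is_aut alpha)
  (sigma : seq (edg (alphaG alpha S)))
  (hsigma : immersed sigma) :
  exists (e0 : edg S) (rest : seq (edg S))
         (sigma0 sigmam : seq (edg (alphaG alpha S))),
    immersed (e0 :: rest) /\
        (exists tau, [seq proj1_sig x | x <- sigma0] ++ tau = alpha_edge alpha e0) /\
        [seq proj1_sig x | x <- sigma0] <> alpha_edge alpha e0 /\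
        (exists tau, tau ++ [seq proj1_sig x | x <- sigmam]
                     = alpha_edge alpha (last e0 rest)) /\
        [seq proj1_sig x | x <- sigmam] <> alpha_edge alpha (last e0 rest) /\
        [seq proj1_sig x | x <- sigma0 ++ sigma ++ sigmam]
          = alpha_path alpha (e0 :: rest) /\
    immersed (sigma0 ++ sigma ++ sigmam).
Proof.
have hk : forall e : edg S, 0 < kk alpha e by move=> e; exact: aut_nonempty.
exact: (final hS hk hsigma).
Qed.
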